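(* Let $E$ be a linear subspace of $\mathbb{R}^n$ and $p_E$ the orthogonal projection onto $E$. Let $\mu$ be a Borel probability measure on $\mathbb{R}^n$ and $\nu$ a Borel probability measure on $E$. Let $\rho=(\mathrm{Id}\times p_E)_\#\mu$ (a transference plan between $\mu$ and $(p_E)_\#\mu$) and let $\sigma$ be an optimal transference plan between $(p_E)_\#\mu$ and $\nu$ for the quadratic cost. If $\mathrm{Spt}((p_E)_\#\mu)$ is compact, then for every gluing $\Gamma$ of $\rho$ and $\sigma$, the measure $\pi^{13}_\#\Gamma$ is an optimal transference plan between $\mu$ and $\nu$ for the quadratic cost $|x-z|^2$.
   Context: Transference plans between probability measures $\mu_1,\mu_2$ are probability measures on the product with marginals $\mu_1,\mu_2$; optimal for the quadratic cost means minimizing $\int|x-y|^2\,d\rho(x,y)$ among them. Given probability measures $\mu_i$ on $X_i$ ($i=1,2,3$), a transference plan $\rho_{12}$ between $\mu_1,\mu_2$ and $\rho_{23}$ between $\mu_2,\mu_3$, a gluing of $\rho_{12}$ and $\rho_{23}$ is a probability measure $\Gamma$ on $X_1\times X_2\times X_3$ whose marginals on $X_1\times X_2$ and $X_2\times X_3$ are $\rho_{12}$ and $\rho_{23}$. Here $\pi^{13}(x_1,x_2,x_3)=(x_1,x_3)$. Here $X_1=\mathbb{R}^n$, $X_2=X_3=E$. *)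

(* Defs.v *)
From HB Require Import structures.
From mathcomp Require Import all_boot all_order all_algebra.
From mathcomp Require Import all_classical all_reals all_analysis.
Set Implicit Arguments. Unset Strict Implicit. Unset Printing Implicit Defensive.
Import Order.TTheory GRing.Theory Num.Theory numFieldTopology.Exports numFieldNormedType.Exports.
Local Open Scope classical_set_scope.
Local Open Scope ring_scope.

(* R^n as row vectors; the Borel sigma-algebra is the one generated by the
   open sets of the (canonical, product) topology of 'rV[R]_n. *)
Definition Rn (R : realType) (n : nat) :=
  g_sigma_algebraType [set U : set 'rV[R]_n | open U].

Definition dotv (R : realType) (n : nat) (x y : 'rV[R]_n) : R :=
  \sum_(i < n) x ord0 i * y ord0 i.

Definition sqdist (R : realType) (n : nat) (x y : 'rV[R]_n) : R :=
  \sum_(i < n) (x ord0 i - y ord0 i) ^+ 2.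

Definition is_orth_proj (R : realType) (n : nat) (E : {vspace 'rV[R]_n})
    (p : 'rV[R]_n -> 'rV[R]_n) : Prop :=
  forall x, p x \in E /\ (forall y, y \in E -> dotv (x - p x) y = 0).

Definition msupport (R : realType) (n : nat) (m : set (Rn R n) -> \bar R)
    : set 'rV[R]_n :=
  [set x | forall U : set 'rV[R]_n, open U -> U x -> (0 < m U)%E].

Definition is_plan (R : realType) (n : nat)
    (m1 m2 : set (Rn R n) -> \bar R) (g : set (Rn R n * Rn R n)%type -> \bar R)
    : Prop :=
  (forall A : set (Rn R n), measurable A -> g (A `*` setT) = m1 A) /\
  (forall B : set (Rn R n), measurable B -> g (setT `*` B) = m2 B).

Definition qcost (R : realType) (n : nat) (z : Rn R n * Rn R n) : \bar R :=
  (sqdist z.1 z.2)%:E.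

Definition optimal_plan (R : realType) (n : nat)
    (m1 m2 : set (Rn R n) -> \bar R) (P : probability (Rn R n * Rn R n)%type R)
    : Prop :=
  is_plan m1 m2 P /\
  forall Q : probability (Rn R n * Rn R n)%type R, is_plan m1 m2 Q ->
    (\int[P]_z qcost z <= \int[Q]_z qcost z)%E.

(* Main.v *)
Require Import Defs.
From HB Require Import structures.
From mathcomp Require Import all_boot all_order all_algebra.
From mathcomp Require Import all_classical all_reals all_analysis.
From mathcomp Require Import measurable_realfun.
From mathcomp Require Import ring lra.
Import Order.TTheory GRing.Theory Num.Theory numFieldTopology.Exports numFieldNormedType.Exports.
Local Open Scope classical_set_scope.
Local Open Scope ring_scope.
Section LA.
Variables (R : realType) (n : nat).
Implicit Types x y z u v : 'rV[R]_n.

Lemma dotvC x y : dotv x y = dotv y x.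
Proof. by rewrite /dotv; apply: eq_bigr => i _; rewrite mulrC. Qed.

Lemma dotvDl x y z : dotv (x + y) z = dotv x z + dotv y z.
Proof. by rewrite /dotv -big_split; apply: eq_bigr => i _; rewrite mxE mulrDl. Qed.

Lemma dotvNl x z : dotv (- x) z = - dotv x z.
Proof. by rewrite /dotv -sumrN; apply: eq_bigr => i _; rewrite mxE mulNr. Qed.

Lemma dotvBl x y z : dotv (x - y) z = dotv x z - dotv y z.
Proof. by rewrite dotvDl dotvNl. Qed.

Lemma dotv_ge0 x : 0 <= dotv x x.
Proof. by apply: sumr_ge0 => i _; rewrite -expr2 sqr_ge0. Qed.

Lemma dotv_eq0 x : dotv x x = 0 -> x = 0.
Proof.
move=> /eqP; rewrite psumr_eq0; last by move=> i _; rewrite -expr2 sqr_ge0.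
move=> /allP H; apply/rowP => i; rewrite mxE.
have := H i (mem_index_enum _); rewrite /= mulf_eq0 orbb ord1.
by move/eqP.
Qed.

Lemma sqdistE x y : sqdist x y = dotv (x - y) (x - y).
Proof. by rewrite /sqdist /dotv; apply: eq_bigr => i _; rewrite !mxE expr2. Qed.

Lemma dotv_pyth u v : dotv u v = 0 -> dotv (u + v) (u + v) = dotv u u + dotv v v.
Proof.
move=> uv; rewrite dotvDl !(dotvC _ (u + v)) !dotvDl (dotvC v u) uv.
by rewrite add0r addr0.
Qed.

Lemma coord_le_dotv x (j : 'I_n) : (x ord0 j) ^+ 2 <= dotv x x.
Proof.
rewrite /dotv (bigD1 j) //= expr2 lerDl.
by apply: sumr_ge0 => i _; rewrite -expr2 sqr_ge0.
Qed.

Lemma dotv_le x e : (forall j, `|x ord0 j| < e) -> dotv x x <= n%:R * e ^+ 2.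
Proof.
move=> H; rewrite /dotv.
have -> : n%:R * e ^+ 2 = \sum_(i < n) e ^+ 2 by rewrite sumr_const card_ord mulr_natl.
apply: ler_sum => i _; rewrite -[_ * _]expr2 -real_normK ?num_real//.
by rewrite !expr2; apply: ler_pM => //; exact: ltW.
Qed.

Variables (E : {vspace 'rV[R]_n}) (pE : 'rV[R]_n -> 'rV[R]_n).
Hypothesis hpE : is_orth_proj E pE.

Lemma pE_in x : pE x \in E. Proof. by case: (hpE x). Qed.
Lemma pE_orth x y : y \in E -> dotv (x - pE x) y = 0. Proof. by case: (hpE x) => _; apply. Qed.

Lemma pE_fix x : x \in E -> pE x = x.
Proof.
move=> xE; have dE : x - pE x \in E by rewrite memvB // pE_in.
have /dotv_eq0 /eqP := @pE_orth x _ dE.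
by rewrite subr_eq0 => /eqP/esym.
Qed.

Lemma pE_fixP x : (pE x = x) <-> (x \in E).
Proof. by split => [<-|/pE_fix//]; exact: pE_in. Qed.

Lemma pyth x z : z \in E -> sqdist x z = sqdist x (pE x) + sqdist (pE x) z.
Proof.
move=> zE; rewrite !sqdistE.
have -> : x - z = (x - pE x) + (pE x - z) by rewrite addrA subrK.
by rewrite dotv_pyth // pE_orth // memvB // pE_in.
Qed.

Lemma pE_lip x y : dotv (pE x - pE y) (pE x - pE y) <= dotv (x - y) (x - y).
Proof.
set w := (x - pE x) - (y - pE y).
have -> : x - y = w + (pE x - pE y).
  by apply/rowP => i; rewrite /w !mxE; ring.
have pdE : pE x - pE y \in E by rewrite memvB // pE_in.
rewrite (@dotv_pyth w); last first.
  by rewrite /w dotvBl !pE_orth // subrr.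
by rewrite lerDr dotv_ge0.
Qed.

End LA.
Section Meas.
Variables (R : realType) (n : nat).
Variables (E : {vspace 'rV[R]_n}) (pE : Rn R n -> Rn R n).
Hypothesis hpE : is_orth_proj E pE.

Lemma coord_cont (j : 'I_n) : continuous (fun x : 'rV[R]_n => x ord0 j).
Proof.
move=> u A /nbhs_ballP[e /= e0 eA]; apply/nbhs_ballP; exists e => //= v [_ uv].
exact/eA/uv.
Qed.

Lemma pE_cont : continuous (pE : 'rV[R]_n -> 'rV[R]_n).
Proof.
move=> u A /nbhs_ballP[e /= e0 eA]; apply/nbhs_ballP.
set k : R := n%:R.
have k0 : 0 <= k by rewrite /k.
have k1 : 0 < k + 1 by lra.
set d := e / (k + 1).
have d0 : 0 < d by rewrite /d divr_gt0.
have eE : e = d * (k + 1) by rewrite /d divfK // gt_eqF.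
exists d => //= v [_ uv]; apply: eA; split => // i j; rewrite ord1.
rewrite /ball /=.
have H1 := @coord_le_dotv _ _ (pE u - pE v) j.
have H2 := @pE_lip _ _ _ _ hpE u v.
have H3 : dotv (u - v) (u - v) <= k * d ^+ 2.
  apply: dotv_le => l; rewrite mxE; have := uv ord0 l; rewrite /ball /=.
  by rewrite mxE.
move: H1; rewrite !mxE => H1.
set a := pE u 0 j - pE v 0 j in H1 *.
have ab : `|a| ^+ 2 = a ^+ 2 by rewrite real_normK // num_real.
have b0 : 0 <= `|a| by [].
set b := `|a| in ab b0 *.
have hb : b ^+ 2 <= k * d ^+ 2 by rewrite ab; exact: le_trans H1 (le_trans H2 H3).
have hc : b ^+ 2 < (d * (k + 1)) ^+ 2.
  apply: (le_lt_trans hb); rewrite -subr_gt0.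
  have -> : (d * (k + 1)) ^+ 2 - k * d ^+ 2 = d ^+ 2 * (k ^+ 2 + k + 1) by ring.
  by apply: mulr_gt0; [exact: exprn_gt0|nra].
rewrite eE; have c0 : 0 < d * (k + 1) by exact: mulr_gt0.
set c := d * (k + 1) in hc c0 *.
nra.
Qed.

Lemma measurable_coord (j : 'I_n) :
  measurable_fun [set: Rn R n] (fun x : Rn R n => x ord0 j).
Proof.
apply: (measurability _ (RGenOpens.measurableE R)).
move=> _ [_ [a [b ->]] <-]; apply: sub_sigma_algebra; rewrite setTI.
by apply: (proj1 (continuousP _) (coord_cont j)); exact: interval_open.
Qed.

Lemma measurable_pE : measurable_fun [set: Rn R n] pE.
Proof.
apply: (measurability [set U : set (Rn R n) | open U]) => //.
move=> _ [B oB <-]; apply: sub_sigma_algebra; rewrite setTI.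
exact: (proj1 (continuousP _) pE_cont).
Qed.

End Meas.
Section Aux.
Variables (R : realType) (n : nat).

Lemma sqdist_ge0 (x y : 'rV[R]_n) : 0 <= sqdist x y.
Proof. by apply: sumr_ge0 => i _; exact: sqr_ge0. Qed.

Lemma sqdistxx (x : 'rV[R]_n) : sqdist x x = 0.
Proof. by apply: big1 => i _; rewrite subrr expr0n. Qed.

Lemma sqdist_eq0 (x y : 'rV[R]_n) : sqdist x y = 0 -> x = y.
Proof. by rewrite sqdistE => /dotv_eq0 /eqP; rewrite subr_eq0 => /eqP. Qed.

Lemma measurable_sqdist d (X : measurableType d) (a b : X -> Rn R n) :
  measurable_fun setT a -> measurable_fun setT b ->
  measurable_fun setT (fun t => sqdist (a t) (b t)).
Proof.
move=> ma mb; rewrite /sqdist; apply: measurable_sum => i.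
apply: measurable_funX; apply: measurable_funB.
- exact: (measurableT_comp (@measurable_coord R n i) ma).
- exact: (measurableT_comp (@measurable_coord R n i) mb).
Qed.

Variables (E : {vspace 'rV[R]_n}) (pE : Rn R n -> Rn R n).
Hypothesis hpE : is_orth_proj E pE.

Lemma measurable_Eset : measurable [set x : Rn R n | x \in E].
Proof.
have -> : [set x : Rn R n | x \in E] =
    (fun x : Rn R n => sqdist x (pE x)) @^-1` [set 0].
  apply/seteqP; split => x /=.
  - by move=> xE; rewrite /preimage /= (@pE_fix R n E pE hpE x xE) sqdistxx.
  - by rewrite /preimage /= => /sqdist_eq0 h; apply/(@pE_fixP R n E pE hpE).
rewrite -[X in measurable X]setTI.
have mh := @measurable_sqdist _ (Rn R n) id pE (@measurable_id _ _ setT) (@measurable_pE R n E pE hpE).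
exact: (mh measurableT [set 0%R] (measurable_set1 _)).
Qed.

End Aux.
Section Transfer.
Local Open Scope ereal_scope.
Context (R : realType).
Lemma transfer d1 d2 (X : measurableType d1) (Y : measurableType d2)
  (m1 : {measure set X -> \bar R}) (m2 : {measure set Y -> \bar R}) (phi : X -> Y) :
  measurable_fun setT phi -> (forall A, measurable A -> m2 A = m1 (phi @^-1` A)) ->
  forall h : Y -> \bar R, measurable_fun setT h -> (forall y, 0 <= h y) ->
  \int[m2]_y h y = \int[m1]_x h (phi x).
Proof.
move=> mphi H h mh h0.
rewrite (eq_measure_integral (pushforward m1 phi)); last by move=> A mA _; exact: H.
by rewrite ge0_integral_pushforward // preimage_setT.
Qed.
End Transfer.
Theorem mainTheorem4 (R : realType) (n : nat) (E : {vspace 'rV[R]_n})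
  (pE : Rn R n -> Rn R n) (hpE : is_orth_proj E pE)
  (mu : probability (Rn R n) R)
  (nu : probability (Rn R n) R)
  (hnu : nu (~` [set x : Rn R n | x \in E]) = 0%E)
  (sigma : probability (Rn R n * Rn R n)%type R)
  (hsigma : optimal_plan (pushforward mu pE) nu sigma)
  (hspt : compact (msupport (pushforward mu pE)))
  (Gamma : probability (Rn R n * Rn R n * Rn R n)%type R)
  (hG12 : forall C : set (Rn R n * Rn R n)%type, measurable C ->
     Gamma ((fun t : (Rn R n * Rn R n * Rn R n)%type => (t.1.1, t.1.2)) @^-1` C)
     = pushforward mu (fun x : Rn R n => (x, pE x)) C)
  (hG23 : forall C : set (Rn R n * Rn R n)%type, measurable C ->
     Gamma ((fun t : (Rn R n * Rn R n * Rn R n)%type => (t.1.2, t.2)) @^-1` C)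
     = sigma C)
  (P : probability (Rn R n * Rn R n)%type R)
  (hP : forall C : set (Rn R n * Rn R n)%type, measurable C ->
     P C = Gamma ((fun t : (Rn R n * Rn R n * Rn R n)%type => (t.1.1, t.2)) @^-1` C)) :
  optimal_plan mu nu P.
Proof.
have mpE := @measurable_pE R n E pE hpE.
have mEs := @measurable_Eset R n E pE hpE.
pose f := fun x : Rn R n => sqdist x (pE x).
pose g := fun u : (Rn R n * Rn R n)%type => sqdist u.1 u.2.
have mf : measurable_fun setT f :=
  @measurable_sqdist R n _ (Rn R n) id pE (@measurable_id _ _ setT) mpE.
have mg : measurable_fun setT g :=
  @measurable_sqdist R n _ _ fst snd measurable_fst measurable_snd.
have mfE : measurable_fun setT (fun x => (f x)%:E) by exact/measurable_EFinP.
have mgE : measurable_fun setT (fun x => (g x)%:E) by exact/measurable_EFinP.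
have f0 : forall x, (0 <= (f x)%:E)%E by move=> x; rewrite lee_fin sqdist_ge0.
have g0 : forall x, (0 <= (g x)%:E)%E by move=> x; rewrite lee_fin sqdist_ge0.
have [[hs1 hs2] hsopt] := hsigma.
split.
  split.
  - move=> A mA; rewrite hP; last exact: measurableX.
    transitivity (Gamma ((fun t : (Rn R n * Rn R n * Rn R n)%type => (t.1.1, t.1.2)) @^-1` (A `*` setT))); first by [].
    rewrite hG12; last exact: measurableX.
    rewrite /pushforward; congr (mu _); apply/seteqP; split => x /=; first by case.
    by move=> Ax; split.
  - move=> B mB; rewrite hP; last exact: measurableX.
    transitivity (Gamma ((fun t : (Rn R n * Rn R n * Rn R n)%type => (t.1.2, t.2)) @^-1` (setT `*` B))); first by [].
    by rewrite hG23 ?hs2 //; exact: measurableX.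
move=> Q [hQ1 hQ2].
pose p13 := fun t : (Rn R n * Rn R n * Rn R n)%type => (t.1.1, t.2).
pose p12 := fun t : (Rn R n * Rn R n * Rn R n)%type => (t.1.1, t.1.2).
pose p23 := fun t : (Rn R n * Rn R n * Rn R n)%type => (t.1.2, t.2).
have m11 : measurable_fun setT (fun t : (Rn R n * Rn R n * Rn R n)%type => t.1.1).
  exact: measurableT_comp measurable_fst measurable_fst.
have m12 : measurable_fun setT (fun t : (Rn R n * Rn R n * Rn R n)%type => t.1.2).
  exact: measurableT_comp measurable_snd measurable_fst.
have mp13 : measurable_fun setT p13 by exact: measurable_fun_pair m11 measurable_snd.
have mp12 : measurable_fun setT p12 by exact: measurable_fun_pair m11 m12.
have mp23 : measurable_fun setT p23 by exact: measurable_fun_pair m12 measurable_snd.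
have LHS : (\int[P]_z qcost z = \int[mu]_x (f x)%:E + \int[sigma]_u (g u)%:E)%E.
  rewrite (@transfer R _ _ _ _ Gamma P p13 mp13 hP (fun u => (g u)%:E) mgE g0).
  transitivity (\int[Gamma]_t ((f t.1.1)%:E + (g (p23 t))%:E))%E.
    apply: ae_eq_integral => //.
    - exact: measurableT_comp mgE mp13.
    - apply: emeasurable_funD.
      + exact: measurableT_comp mfE m11.
      + exact: measurableT_comp mgE mp23.
    pose N1 := (fun u : (Rn R n * Rn R n)%type => sqdist u.2 (pE u.1)) @^-1` (~` [set 0%R]).
    have mh := @measurable_sqdist R n _ (Rn R n * Rn R n)%type snd (pE \o fst)
      measurable_snd (measurableT_comp mpE measurable_fst).
    have mN1 : measurable N1.
      by rewrite -[X in measurable X]setTI; exact: (mh measurableT _ (measurableC (measurable_set1 _))).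
    pose N2 := (@setT (Rn R n)) `*` ~` [set x : Rn R n | x \in E].
    have mN2 : measurable N2 by apply: measurableX => //; exact: measurableC.
    have mpN1 : measurable (p12 @^-1` N1).
      by rewrite -[X in measurable X]setTI; exact: mp12.
    have mpN2 : measurable (p23 @^-1` N2).
      by rewrite -[X in measurable X]setTI; exact: mp23.
    have n1 : Gamma.-negligible (p12 @^-1` N1).
      exists (p12 @^-1` N1); split => //.
      rewrite /p12 hG12 // /pushforward.
      have -> : (fun x : Rn R n => (x, pE x)) @^-1` N1 = set0.
        by apply/seteqP; split => x //=; rewrite /N1 /preimage /= sqdistxx.
      by rewrite measure0.
    have n2 : Gamma.-negligible (p23 @^-1` N2).
      exists (p23 @^-1` N2); split => //.
      by rewrite /p23 hG23 // hs2 //; exact: measurableC.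
    apply: (negligibleS _ (negligibleU n1 n2)).
    move=> t /= Hn; apply: contrapT => HN; apply: Hn => _.
      have h1 : t.1.2 = pE t.1.1.
        by apply: sqdist_eq0; apply: contrapT => h; apply: HN; left.
      have h2 : t.2 \in E.
        by apply: contrapT => h; apply: HN; right.
      rewrite /g /f /p13 /p23 /= h1 -EFinD.
      by rewrite (@pyth R n E pE hpE t.1.1 t.2 h2).
  rewrite ge0_integralD //; last 2 first.
  - exact: measurableT_comp mfE m11.
  - exact: measurableT_comp mgE mp23.
  congr (_ + _)%E.
  - symmetry; apply: (@transfer R _ _ _ _ Gamma mu (fun t => t.1.1) m11 _ _ mfE f0).
    move=> A mA.
    have -> : (fun t : (Rn R n * Rn R n * Rn R n)%type => t.1.1) @^-1` A =
        p12 @^-1` (A `*` setT).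
      by apply/seteqP; split => t /=; [move=> ?; split|case].
    apply: (eq_trans _ (esym (hG12 _ (measurableX mA measurableT)))).
    rewrite /pushforward; congr (mu _); apply/seteqP; split => x /=; first by move=> Ax; split.
    by case.
  - symmetry; apply: (@transfer R _ _ _ _ Gamma sigma p23 mp23 _ _ mgE g0).
    by move=> A mA; exact: (esym (hG23 _ mA)).
pose phi2 := fun u : (Rn R n * Rn R n)%type => (pE u.1, u.2).
have mphi2 : measurable_fun setT phi2.
  exact: measurable_fun_pair (measurableT_comp mpE measurable_fst) measurable_snd.
have RHS : (\int[Q]_z qcost z = \int[mu]_x (f x)%:E + \int[Q]_u (g (phi2 u))%:E)%E.
  transitivity (\int[Q]_u ((f u.1)%:E + (g (phi2 u))%:E))%E.
    apply: ae_eq_integral => //.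
    - apply: emeasurable_funD.
      + exact: measurableT_comp mfE measurable_fst.
      + exact: measurableT_comp mgE mphi2.
    pose N2 := (@setT (Rn R n)) `*` ~` [set x : Rn R n | x \in E].
    have mN2 : measurable N2 by apply: measurableX => //; exact: measurableC.
    have n2 : Q.-negligible N2.
      exists N2; split => //.
      by rewrite /N2 hQ2 //; exact: measurableC.
    apply: (negligibleS _ n2).
    move=> u /= Hn; apply: contrapT => HN; apply: Hn => _.
    have h2 : u.2 \in E.
      by apply: contrapT => h; apply: HN; split.
    rewrite /qcost /g /f /phi2 /= -EFinD.
    by rewrite (@pyth R n E pE hpE u.1 u.2 h2).
  rewrite ge0_integralD //; last 2 first.
  - exact: measurableT_comp mfE measurable_fst.
  - exact: measurableT_comp mgE mphi2.
  congr (_ + _)%E.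
  symmetry; apply: (@transfer R _ _ _ _ Q mu fst measurable_fst _ _ mfE f0).
  move=> A mA.
  apply: (eq_trans (esym (hQ1 _ mA))); congr (Q _).
  by apply/seteqP; split => u /=; [case|move=> ?; split].
pose X2 : {mfun _ >-> _} := HB.pack phi2 (isMeasurableFun.Build _ _ _ _ phi2 mphi2).
have hQ' : is_plan (pushforward mu pE) nu (distribution Q X2).
  split.
  - move=> A mA.
    have mA' : measurable (pE @^-1` A).
      by rewrite -[X in measurable X]setTI; exact: mpE.
    exact: (hQ1 _ mA').
  - by move=> B mB; exact: (hQ2 _ mB).
have := hsopt (distribution Q X2) hQ'.
rewrite (@transfer R _ _ _ _ Q (distribution Q X2) phi2 mphi2 (fun A _ => erefl) (fun u => (g u)%:E) mgE g0).
move=> H; rewrite LHS RHS; exact: leeD2l.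
Qed.
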